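(* Let $\ast$ be a composition on $\mathbb{L}$ that admits Taylor expansion, i.e., for all $f,g,h\in\mathbb{L}$ with $g>\mathbb{R}$ and $h\prec g$ the sum $\sum_{n=0}^\infty\frac{f^{(n)}\ast g}{n!}h^n$ exists and equals $f\ast(g+h)$. Then $\ast$ obeys the chain rule: $(f\ast g)'=(f'\ast g)\cdot g'$ for all $f,g\in\mathbb{L}$ with $g>\mathbb{R}$.
   Context: Fix distinct symbols $\ell_\alpha$ for all ordinals $\alpha$. Exponent sequences $r=(r_\beta)$ are families of reals over all ordinals, zero beyond some ordinal; monomials $\ell^r=\prod_\beta\ell_\beta^{r_\beta}$ form a group $\mathfrak{L}$ ($\ell^r\ell^s=\ell^{r+s}$), ordered by $\ell^r\prec\ell^s$ iff $r\ne s$ and $r_\beta<s_\beta$ at the least differing $\beta$; $\ell_\alpha$ is the monomial with exponent $1$ at $\alpha$ and $0$ elsewhere, $x:=\ell_0$. With $\sigma(\ell^r)=\{\beta:r_\beta\neq0\}$, $\mathfrak{L}_{<\alpha}=\{\mathfrak{m}:\sigma(\mathfrak{m})\subseteq\alpha\}$, $\mathbb{L}_{<\alpha}=\mathbb{R}[[\mathfrak{L}_{<\alpha}]]$ is the Hahn field of series with well-based support (no infinite strictly increasing sequence), ordered by the sign of the leading coefficient, and $\mathbb{L}=\bigcup_\alpha\mathbb{L}_{<\alpha}$. $f\prec g$ means $\mathfrak{d}(f)\prec\mathfrak{d}(g)$, where $\mathfrak{d}$ is the largest monomial of the support ($\mathfrak{d}(0)=0$, below all monomials). $g>\mathbb{R}$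 means $g>c$ for all real $c$; $\mathbb{L}^{>\mathbb{R}}$ is the class of such $g$. Summable families: all members in one $\mathbb{L}_{<\alpha}$, union of supports well-based, each monomial in finitely many supports; sums coefficientwise. Logarithm: $\log\ell^r=\sum r_\beta\ell_{\beta+1}$ and $\log(c\,\mathfrak{d}(f)(1+\epsilon))=\log\mathfrak{d}(f)+\log c+\sum_{n\ge1}\frac{(-1)^{n-1}}{n}\epsilon^n$ for $c\in\mathbb{R}^{>0}$, $\epsilon\prec1$. $f'$, $f^{(n)}$ refer to the unique $\mathbb{R}$-linear derivation on $\mathbb{L}$ with $\ell_\alpha'=\prod_{\beta<\alpha}\ell_\beta^{-1}$ commuting with sums of summable families. A composition on $\mathbb{L}$ is a map $\ast:\mathbb{L}\times\mathbb{L}^{>\mathbb{R}}\to\mathbb{L}$ such that (CL1) each $f\mapsto f\ast g$ is an $\mathbb{R}$-algebra endomorphism; (CL2) $f\ast x=f$, $x\ast g=g$; (CL3) $\log(f\ast g)=(\log f)\ast g$ for $f>0$; (CL4) $f\mapsto f\ast g$ maps summable families to summable families and commutes with their sums; (CL5) $(f\ast g)\ast h=f\ast(g\ast h)$. *)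

(* Defs.v *)
From HB Require Import structures.
From mathcomp Require Import all_boot all_order all_algebra.
From mathcomp Require Import boolp classical_sets cardinality reals exp.
From Stdlib Require Import ClassicalEpsilon.
From Stdlib Require List.

Set Implicit Arguments.
Unset Strict Implicit.
Unset Printing Implicit Defensive.

Import Order.TTheory GRing.Theory Num.Theory.
Local Open Scope ring_scope.

(* The (class of) ordinals, modelled as a well-ordered type with a least
   element and successors. *)
Record ordStruct := OrdStruct {
  ocar :> Type;
  olt : ocar -> ocar -> Prop;
  olt_trans : forall a b c, olt a b -> olt b c -> olt a c;
  olt_irrefl : forall a, ~ olt a a;
  olt_total : forall a b, olt a b \/ a = b \/ olt b a;
  olt_wf : well_founded olt;
  ozero : ocar;
  ozero_least : forall a, a = ozero \/ olt ozero a;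
  osucc : ocar -> ocar;
  osucc_gt : forall a, olt a (osucc a);
  osucc_least : forall a b, olt a b -> b = osucc a \/ olt (osucc a) b }.

Section LogHyperseries.
Variable R : realType.
Variable O : ordStruct.

Definition fsum (I : Type) (c : I -> R) : R :=
  epsilon (inhabits 0) (fun v => exists s : list I, List.NoDup s /\
     (forall i, c i != 0 -> List.In i s) /\ v = \sum_(i <- s) c i).

(* exponent sequences r = (r_beta); a monomial l^r is identified with r *)
Definition expo := O -> R.
Definition eadd (r s : expo) : expo := fun b => r b + s b.
Definition ezero : expo := fun _ => 0.
(* the exponent sequence of l_a *)
Definition eunit (a : O) : expo := fun b => if `[< b = a >] then 1 else 0.
(* the exponent sequence of prod_{c <= b} l_c *)
Definition eupto (b : O) : expo :=
  fun c => if `[< c = b \/ olt c b >] then 1 else 0.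

Definition mon_lt (r s : expo) : Prop :=
  exists b, r b < s b /\ forall c, olt c b -> r c = s c.

Definition series := expo -> R.
Definition supp (f : series) : set expo := [set m | f m != 0].
Definition well_based (A : set expo) : Prop :=
  ~ exists u : nat -> expo, (forall n, A (u n)) /\ forall n, mon_lt (u n) (u n.+1).
Definition supp_below (a : O) (f : series) : Prop :=
  forall m, f m != 0 -> forall b, m b != 0 -> olt b a.
Definition inLa (a : O) (f : series) : Prop := supp_below a f /\ well_based (supp f).
Definition inL (f : series) : Prop := exists a, inLa a f.

Definition summable (I : Type) (F : I -> series) : Prop :=
  (exists a, forall i, inLa a (F i)) /\
  well_based (\bigcup_(i in [set: I]) supp (F i)) /\
  (forall m, finite_set [set i | F i m != 0]).
Definition ssum (I : Type) (F : I -> series) : series :=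
  fun m => fsum (fun i => F i m).

Definition mono (r : expo) : series := fun n => if `[< n = r >] then 1 else 0.
Definition cst (c : R) : series := fun n => if `[< n = ezero >] then c else 0.
Definition sadd (f g : series) : series := fun m => f m + g m.
Definition sopp (f : series) : series := fun m => - f m.
Definition sscale (c : R) (f : series) : series := fun m => c * f m.
Definition smul (f g : series) : series :=
  fun m => fsum (fun p : expo * expo =>
                   if `[< eadd p.1 p.2 = m >] then f p.1 * g p.2 else 0).
Definition spow (f : series) (n : nat) : series := iter n (smul f) (cst 1).
Definition xL : series := mono (eunit (ozero O)).

Definition is_lead (f : series) (m : expo) : Prop :=
  f m != 0 /\ forall n, mon_lt m n -> f n = 0.
Definition spos (f : series) : Prop := exists m, is_lead f m /\ 0 < f m.
Definition sgt (f g : series) : Prop := spos (sadd f (sopp g)).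
Definition gtR (g : series) : Prop := forall c : R, sgt g (cst c).
Definition asym_lt (f g : series) : Prop :=
  exists m, is_lead g m /\ forall n, f n != 0 -> mon_lt n m.

(* the derivation: (l^r)' = sum_b r_b l^(r - eupto b), extended coefficientwise *)
Definition sder (f : series) : series :=
  fun n => fsum (fun b : O => (n b + 1) * f (eadd n (eupto b))).
Definition sderN (n : nat) (f : series) : series := iter n sder f.

Definition lead (f : series) : expo := epsilon (inhabits ezero) (is_lead f).
Definition slog (f : series) : series :=
  let m := lead f in
  let c := f m in
  let eps : series := fun n => f (eadd n m) / c - (if `[< n = ezero >] then 1 else 0) in
  sadd (ssum (fun b : O => sscale (m b) (mono (eunit (osucc b)))))
   (sadd (cst (ln c))
     (ssum (fun k : nat => if k == 0%N then cst 0
                 else sscale ((-1) ^+ k.-1 / k%:R) (spow eps k)))).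

Definition is_composition (comp : series -> series -> series) : Prop :=
  (forall f g, inL f -> gtR g -> inL (comp f g)) /\
  (forall f h g, inL f -> inL h -> gtR g ->
      comp (sadd f h) g = sadd (comp f g) (comp h g)) /\
  (forall c f g, inL f -> gtR g -> comp (sscale c f) g = sscale c (comp f g)) /\
  (forall f h g, inL f -> inL h -> gtR g ->
      comp (smul f h) g = smul (comp f g) (comp h g)) /\
  (forall g, gtR g -> comp (cst 1) g = cst 1) /\
  (forall f, inL f -> comp f xL = f) /\
  (forall g, inL g -> gtR g -> comp xL g = g) /\
  (forall f g, inL f -> spos f -> gtR g -> slog (comp f g) = comp (slog f) g) /\
  (forall (I : Type) (F : I -> series) g, summable F -> gtR g ->
      summable (fun i => comp (F i) g) /\
      comp (ssum F) g = ssum (fun i => comp (F i) g)) /\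
  (forall f g h, inL f -> inL g -> inL h -> gtR g -> gtR h ->
      comp (comp f g) h = comp f (comp g h)).

Definition admits_taylor (comp : series -> series -> series) : Prop :=
  forall f g h, inL f -> inL g -> inL h -> gtR g -> asym_lt h g ->
    let T := fun n : nat =>
      sscale (n`!%:R)^-1 (smul (comp (sderN n f) g) (spow h n)) in
    summable T /\ ssum T = comp f (sadd g h).

End LogHyperseries.

(* Main.v *)
Require Import Defs.
From HB Require Import structures.
From mathcomp Require Import all_boot all_order all_algebra.
From mathcomp Require Import boolp classical_sets cardinality reals exp.
From mathcomp Require Import lra.
From Stdlib Require Import ClassicalEpsilon Permutation.
From Stdlib Require List.

Set Implicit Arguments.
Unset Strict Implicit.
Unset Printing Implicit Defensive.

Import Order.TTheory GRing.Theory Num.Theory.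
Local Open Scope ring_scope.
Section FS.
Variable R : realType.

Lemma sum_filter (I : Type) (c : I -> R) (s : list I) :
  \sum_(i <- s) c i = \sum_(i <- List.filter (fun i => c i != 0) s) c i.
Proof.
elim: s => [|i s IH] //=; rewrite big_cons; case: ifP => H.
  by rewrite big_cons IH.
by move/negbFE: H => /eqP ->; rewrite add0r IH.
Qed.

Lemma sum_perm (I : Type) (c : I -> R) (s1 s2 : list I) :
  Permutation s1 s2 -> \sum_(i <- s1) c i = \sum_(i <- s2) c i.
Proof.
elim => [| x l l' _ IH | x y l | l l' l'' _ IH1 _ IH2].
- by [].
- by rewrite !big_cons IH.
- by rewrite !big_cons addrCA.
- by rewrite IH1 IH2.
Qed.

Lemma fsum_list (I : Type) (c : I -> R) (s : list I) :
  List.NoDup s -> (forall i, c i != 0 -> List.In i s) -> fsum c = \sum_(i <- s) c i.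
Proof.
move=> nd cov; rewrite /fsum.
have ex : exists v, (fun v => exists s, List.NoDup s /\
   (forall i, c i != 0 -> List.In i s) /\ v = \sum_(i <- s) c i) v.
  by exists (\sum_(i <- s) c i), s.
have [s' [nd' [cov' ->]]] := epsilon_spec (inhabits 0) _ ex.
rewrite (sum_filter c s) (sum_filter c s'); apply: sum_perm.
apply: NoDup_Permutation; try apply: List.NoDup_filter => //.
move=> i; rewrite !List.filter_In; split=> -[_ h]; split=> //; first [apply: cov' | apply: cov]; exact h.
Qed.

Lemma fsum_single (I : Type) (c : I -> R) (i0 : I) :
  (forall i, i <> i0 -> c i = 0) -> fsum c = c i0.
Proof.
move=> H; rewrite (@fsum_list _ _ [:: i0]).
- by rewrite big_seq1.
- by constructor; [by [] | constructor].
- move=> i ci; case: (pselect (i = i0)) => [->|ne]; first by left.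
  by rewrite H // eqxx in ci.
Qed.

Lemma fsum_zero (I : Type) (c : I -> R) : (forall i, c i = 0) -> fsum c = 0.
Proof.
move=> H; rewrite (@fsum_list _ _ [::]); first by rewrite big_nil.
  by constructor.
by move=> i; rewrite H eqxx.
Qed.

Lemma fsum_neq0 (I : Type) (c : I -> R) : fsum c != 0 -> exists i, c i != 0.
Proof.
move=> H; case: (pselect (exists i, c i != 0)) => // H'.
exfalso; move: H; rewrite fsum_zero ?eqxx // => i.
by apply: (contra_notP _ H') => /eqP ci; exists i.
Qed.

Lemma NoDup_map_inj (I J : Type) (f : I -> J) (s : list I) :
  injective f -> List.NoDup s -> List.NoDup (map f s).
Proof.
move=> inj; elim => [|x l nx _ IH] /=.
  exact: List.NoDup_nil.
apply: List.NoDup_cons => //.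
move/List.in_map_iff => [y [fy iy]]; apply: nx.
by rewrite -(inj _ _ fy).
Qed.

Lemma fsum_bij (I J : Type) (c : I -> R) (phi : J -> I) (psi : I -> J) :
  cancel phi psi -> cancel psi phi -> fsum c = fsum (fun j => c (phi j)).
Proof.
move=> K1 K2; rewrite /fsum; congr (epsilon _ _); apply: funext => v.
apply: propext; split => -[s [nd [cov ->]]].
- exists (map psi s); split; first exact: NoDup_map_inj (can_inj K2) nd.
  split.
    by move=> j cj; rewrite -(K1 j); apply: List.in_map; apply: cov.
  by rewrite big_map; apply: eq_bigr => i _; rewrite K2.
- exists (map phi s); split; first exact: NoDup_map_inj (can_inj K1) nd.
  split.
    by move=> i ci; rewrite -(K2 i); apply: List.in_map; apply: cov; rewrite K2.
  by rewrite big_map.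
Qed.

End FS.
Section Ord.
Variables (R : realType) (O : ordStruct).
Local Notation olt := (@olt O).
Local Notation ex := (expo R O).

Lemma olt_asym a b : olt a b -> olt b a -> False.
Proof. by move=> h1 h2; apply: (olt_irrefl (olt_trans h1 h2)). Qed.

Lemma not_lt_zero c : ~ olt c (ozero O).
Proof.
move=> h; case: (ozero_least c) => [e|h2].
  by rewrite e in h; apply: (olt_irrefl h).
exact: olt_asym h h2.
Qed.

Lemma wf_min (P : O -> Prop) : (exists x, P x) ->
  exists x, P x /\ forall y, P y -> ~ olt y x.
Proof.
move=> [x Px]; apply: NNPP => H.
have : forall x, P x -> False.
  move=> y; elim/(well_founded_ind (@olt_wf O)): y => y IH Py.
  by apply: H; exists y; split=> // z Pz lt; exact: IH z lt Pz.
by move/(_ x Px).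
Qed.

Lemma lt_succ c b : olt c (osucc b) -> c = b \/ olt c b.
Proof.
move=> h; case: (olt_total c b) => [h1|[->|h1]]; [by right|by left|].
case: (osucc_least h1) => [e|h2]; first by rewrite e in h; case: (olt_irrefl h).
by case: (olt_asym h h2).
Qed.

Lemma le_lt_trans a b c : (a = b \/ olt a b) -> olt b c -> olt a c.
Proof. by case=> [->//|h1 h2]; exact: olt_trans h1 h2. Qed.

Lemma ub2 a b : exists c, olt a c /\ olt b c.
Proof.
case: (olt_total a b) => [h|[->|h]].
- by exists (osucc b); split; [exact: olt_trans h (osucc_gt b)| exact: osucc_gt].
- by exists (osucc b); split; exact: osucc_gt.
- by exists (osucc a); split; [exact: osucc_gt | exact: olt_trans h (osucc_gt a)].
Qed.

Lemma mon_lt_irr (r : ex) : ~ mon_lt r r.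
Proof. by move=> [b [h _]]; rewrite ltxx in h. Qed.

Lemma mon_lt_trans (r s t : ex) : mon_lt r s -> mon_lt s t -> mon_lt r t.
Proof.
move=> [b1 [l1 e1]] [b2 [l2 e2]].
case: (olt_total b1 b2) => [h|[e|h]]; try subst b2.
- exists b1; split; first by rewrite -(e2 _ h).
  by move=> c hc; rewrite e1 // e2 //; exact: olt_trans hc h.
- exists b1; split; first exact: lt_trans l1 l2.
  by move=> c hc; rewrite e1 // e2.
- exists b2; split; first by rewrite (e1 _ h).
  by move=> c hc; rewrite e1 ?e2 //; exact: olt_trans hc h.
Qed.

Lemma mon_lt_asym (r s : ex) : mon_lt r s -> mon_lt s r -> False.
Proof. by move=> h1 h2; apply: (mon_lt_irr (mon_lt_trans h1 h2)). Qed.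

Lemma mon_lt_total (r s : ex) : r <> s -> mon_lt r s \/ mon_lt s r.
Proof.
move=> ne.
have : exists b, r b <> s b.
  apply: NNPP => H; apply: ne; apply: funext => b; apply: NNPP => H2.
  by apply: H; exists b.
move/wf_min => [b [nb mb]].
have eqb : forall c, olt c b -> r c = s c.
  by move=> c hc; apply: NNPP => H; exact: mb c H hc.
case: (ltgtP (r b) (s b)) => [h|h|h]; last by [].
- by left; exists b.
- by right; exists b; split=> // c hc; rewrite eqb.
Qed.

Lemma mon_lt_add (u v u' v' : ex) : mon_lt u v -> (u' = v' \/ mon_lt u' v') ->
  mon_lt (eadd u u') (eadd v v').
Proof.
move=> [b [l e]] [<-|[b' [l' e']]].
  by exists b; split; rewrite /eadd ?ltrD2r // => c hc; rewrite e.
rewrite /eadd; case: (olt_total b b') => [h|[e0|h]]; try subst b'.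
- exists b; split; first by rewrite (e' _ h) ltrD2r.
  by move=> c hc; rewrite e // e' //; exact: olt_trans hc h.
- exists b; split; first exact: ltrD l l'.
  by move=> c hc; rewrite e // e'.
- exists b'; split; first by rewrite (e _ h) ltrD2l.
  by move=> c hc; rewrite e ?e' //; exact: olt_trans hc h.
Qed.

Lemma eupto_mono (b b' : O) : b = b' \/ olt b b' ->
  eupto R b = eupto R b' \/ mon_lt (eupto R b) (eupto R b').
Proof.
case=> [->|h]; first by left.
right; exists (osucc b); split.
- rewrite /eupto asboolF; last first.
    by case=> [e|h2]; [move: (osucc_gt b); rewrite e => /olt_irrefl | exact: olt_asym h2 (osucc_gt b)].
  rewrite asboolT ?ltr01 //.
  by case: (osucc_least h) => [->|h2]; [left|right].
- move=> c hc; have hc' := lt_succ hc.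
  have H2 : c = b' \/ olt c b'.
    by right; case: hc' => [->//|h2]; exact: olt_trans h2 h.
  by rewrite /eupto (asboolT hc') (asboolT H2).
Qed.

End Ord.
Fixpoint sub_seq (m : nat -> nat) (k : nat) : nat :=
  match k with 0 => m 0%N | k.+1 => m (sub_seq m k).+1 end.

Section Ser.
Variables (R : realType) (O : ordStruct).
Local Notation olt := (@olt O).
Local Notation ex := (expo R O).
Local Notation ser := (series R O).
Implicit Types (S U : ser) (p q r : ex).

Lemma wb_sub (A B : set ex) : (forall p, A p -> B p) -> well_based B -> well_based A.
Proof. by move=> sub wb [u [hu hi]]; apply: wb; exists u; split=> // n; apply: sub. Qed.

Lemma inc_lt (u : nat -> ex) : (forall n, mon_lt (u n) (u n.+1)) ->
  forall i j, (i < j)%N -> mon_lt (u i) (u j).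
Proof.
move=> h i; elim=> // j IH; rewrite ltnS leq_eqVlt => /orP [/eqP ->|hij].
  exact: h.
exact: mon_lt_trans (IH hij) (h j).
Qed.

Lemma wb2 (A : set ex) x y : (forall p, A p -> p = x \/ p = y) -> well_based A.
Proof.
move=> H [u [hu hi]].
have h01 := hi 0%N; have h12 := hi 1%N; have h02 := inc_lt hi (isT : (0 < 2)%N).
case: (H _ (hu 0%N)) => e0; case: (H _ (hu 1%N)) => e1; case: (H _ (hu 2%N)) => e2;
  rewrite ?e0 ?e1 ?e2 in h01 h12 h02;
  solve [exact: mon_lt_irr h01 | exact: mon_lt_irr h12 | exact: mon_lt_irr h02].
Qed.

Lemma mono_neq0 r p : mono r p != 0 -> p = r.
Proof. by rewrite /mono; case: (pselect (p = r)) => [//|ne]; rewrite asboolF ?eqxx. Qed.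

Lemma mono_at r : mono r r = 1.
Proof. by rewrite /mono asboolT. Qed.

Lemma mono_ne r p : p <> r -> mono r p = 0.
Proof. by move=> ne; rewrite /mono asboolF. Qed.

Lemma cst_neq0 c p : cst c p != 0 -> p = @ezero R O.
Proof. by rewrite /cst; case: (pselect (p = @ezero R O)) => [//|ne]; rewrite asboolF ?eqxx. Qed.

Lemma cst_ne c p : p <> @ezero R O -> cst c p = 0.
Proof. by move=> ne; rewrite /cst asboolF. Qed.

Lemma cst_at c : cst c (@ezero R O) = c.
Proof. by rewrite /cst asboolT. Qed.

Lemma smul_supp S U m : smul S U m != 0 ->
  exists p1 p2, eadd p1 p2 = m /\ S p1 != 0 /\ U p2 != 0.
Proof.
move/fsum_neq0 => [[p1 p2]] /=; case: (pselect (eadd p1 p2 = m)) => [e|ne].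
  rewrite asboolT // mulf_eq0 negb_or => /andP [h1 h2].
  by exists p1, p2.
by rewrite asboolF ?eqxx.
Qed.

Lemma eadd0 p : eadd p (@ezero R O) = p.
Proof. by apply: funext => b; rewrite /eadd /ezero addr0. Qed.

Lemma smul_cst1 S : smul S (cst 1) = S.
Proof.
apply: funext => m; rewrite /smul (@fsum_single _ _ _ (m, @ezero R O)) /=.
  by rewrite eadd0 asboolT // cst_at mulr1.
move=> [p1 p2] /= ne; case: (pselect (p2 = @ezero R O)) => [e|ne2].
  subst p2; rewrite eadd0 asboolF //; by move=> e; apply: ne; rewrite e.
by rewrite cst_ne // mulr0; case: ifP.
Qed.

Lemma smul_mono_r S s m : smul S (mono s) m = S (fun b => m b - s b).
Proof.
rewrite /smul (@fsum_single _ _ _ ((fun b => m b - s b), s)) /=.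
  rewrite mono_at mulr1 asboolT //; apply: funext => b; rewrite /eadd subrK //.
move=> [p1 p2] /= ne; case: (pselect (p2 = s)) => [e|ne2].
  subst p2; rewrite asboolF // => e; apply: ne; rewrite -e; congr pair.
  by apply: funext => b; rewrite /eadd addrK.
by rewrite mono_ne // mulr0; case: ifP.
Qed.

Lemma smul_mono_mono r s : smul (mono r) (mono s) = mono (eadd r s).
Proof.
apply: funext => m; rewrite smul_mono_r /mono.
case: (pselect (m = eadd r s)) => [e|ne].
  rewrite !asboolT //; apply: funext => b; rewrite e /eadd addrK //.
rewrite !asboolF // => e; apply: ne; rewrite -e; apply: funext => b.
by rewrite /eadd subrK.
Qed.

Lemma spow_mono r k : spow (mono r) k = mono (fun b => k%:R * r b).
Proof.
elim: k => [|k IH].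
  rewrite /spow /=; apply: funext => p; rewrite /cst /mono; congr (if _ then _ else _).
  by congr asbool; apply: propext; split => ->; apply: funext => b; rewrite /ezero mul0r.
rewrite /spow iterS -/(spow _ _) IH smul_mono_mono; congr mono.
by apply: funext => b; rewrite /eadd mulrS mulrDl mul1r.
Qed.

Lemma spow_cst1 k : spow (cst 1) k = (cst 1 : ser).
Proof.
elim: k => [//|k IH]; by rewrite /spow iterS -/(spow _ _) IH smul_cst1.
Qed.

Lemma spow1 S : spow S 1 = S.
Proof. by rewrite /spow /= smul_cst1. Qed.

Lemma sder_supp S p : sder S p != 0 ->
  exists b, S (eadd p (eupto R b)) != 0 /\ p b + 1 != 0.
Proof.
move/fsum_neq0 => [b]; rewrite mulf_eq0 negb_or => /andP [h1 h2].
by exists b.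
Qed.

Lemma eupto_self (b : O) : eupto R b b = 1.
Proof. by rewrite /eupto asboolT //; left. Qed.

Lemma eupto_neq0 (b c : O) : eupto R b c != 0 -> c = b \/ olt c b.
Proof.
rewrite /eupto; case: (pselect (c = b \/ olt c b)) => // ne.
by rewrite asboolF ?eqxx.
Qed.

Lemma sder_below (a : O) S : supp_below a S -> supp_below a (sder S).
Proof.
move=> H m /sder_supp [b [hS hb]] c mc.
have hbq : eadd m (eupto R b) b != 0 by rewrite /eadd eupto_self.
case: (pselect (eadd m (eupto R b) c = 0)) => [e|ne].
  have : eupto R b c != 0.
    by apply: contra mc; rewrite /eadd in e => /eqP h; rewrite h addr0 in e; apply/eqP.
  move/eupto_neq0 => hc; apply: le_lt_trans hc _; exact: H _ hS b hbq.
by apply: (H _ hS); apply/eqP.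
Qed.

Lemma ord_subseq (b : nat -> O) : exists phi : nat -> nat,
  (forall k, (phi k < phi k.+1)%N) /\
  forall k, b (phi k) = b (phi k.+1) \/ olt (b (phi k)) (b (phi k.+1)).
Proof.
have : forall i, exists j, (i <= j)%N /\ forall j', (i <= j')%N -> ~ olt (b j') (b j).
  move=> i; have [x [[j [ij <-]] mx]] : exists x, (exists j, (i <= j)%N /\ b j = x) /\
     forall y, (exists j, (i <= j)%N /\ b j = y) -> ~ olt y x.
    by apply: wf_min; exists (b i), i.
  by exists j; split=> // j' ij'; apply: mx; exists j'.
move=> /choice [m hm]; exists (sub_seq m); split.
  by move=> k /=; case: (hm (sub_seq m k).+1).
move=> k /=.
have key : forall k, exists i, (i <= sub_seq m k)%N /\ m i = sub_seq m k.
  by case=> [|k'] /=; [exists 0%N | exists (sub_seq m k').+1; split=> //; case: (hm (sub_seq m k').+1)].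
have [i [ik mi]] := key k.
have [_ hmi] := hm i.
have hle : (i <= m (sub_seq m k).+1)%N.
  apply: (leq_trans ik); apply: ltnW; by case: (hm (sub_seq m k).+1).
have := hmi _ hle; rewrite mi => nlt.
case: (olt_total (b (sub_seq m k)) (b (m (sub_seq m k).+1))) => [h|[h|h]]; [by right|by left|by [] ].
Qed.

Lemma sder_wb S : well_based (supp S) -> well_based (supp (sder S)).
Proof.
move=> wb [u [hu hi]].
have /choice [bn hb] : forall n, exists b, S (eadd (u n) (eupto R b)) != 0 /\ u n b + 1 != 0.
  by move=> n; apply: sder_supp; apply: hu.
have [phi [hphi hmono]] := ord_subseq bn.
apply: wb; exists (fun k => eadd (u (phi k)) (eupto R (bn (phi k)))); split.
  by move=> k; case: (hb (phi k)).
move=> k /=; apply: mon_lt_add; first exact: (inc_lt hi (hphi k)).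
exact: eupto_mono (hmono k).
Qed.

Lemma sderN_inLa (a : O) S k : inLa a S -> inLa a (sderN k S).
Proof.
move=> [h1 h2]; elim: k => [//|k [IH1 IH2]].
by rewrite /sderN iterS; split; [apply: sder_below | apply: sder_wb].
Qed.

Lemma lt_eupto p (b : O) : mon_lt p (eadd p (eupto R b)).
Proof.
exists (ozero O); split; last by move=> c /not_lt_zero.
rewrite /eadd /eupto asboolT; first by rewrite ltrDl ltr01.
by case: (ozero_least b) => [->|h]; [left|right].
Qed.

Lemma sderN_lt S k p : sderN k.+1 S p != 0 -> exists q, S q != 0 /\ mon_lt p q.
Proof.
elim: k p => [|k IH] p.
  by move/sder_supp => [b [h _]]; exists (eadd p (eupto R b)); split=> //; exact: lt_eupto.
rewrite /sderN iterS => /sder_supp [b [h _]].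
have [q [hq lt]] := IH _ h.
by exists q; split=> //; exact: mon_lt_trans (lt_eupto p b) lt.
Qed.

End Ser.
Section Aux.
Variables (R : realType) (O : ordStruct).
Local Notation olt := (@olt O).
Local Notation ex := (expo R O).
Local Notation ser := (series R O).
Local Notation ez := (@ezero R O).
Local Notation e0 := (eunit R (ozero O)).
Implicit Types (S U : ser) (p q r : ex).

Lemma fact1R : ((1`!)%:R : R)^-1 = 1.
Proof. by rewrite factS fact0 muln1 invr1. Qed.

Lemma factR_neq0 k : ((k`!)%:R : R)^-1 != 0.
Proof. by rewrite invr_neq0 // pnatr_eq0 -lt0n fact_gt0. Qed.

Lemma below_mono (x a : O) S : olt x a -> supp_below x S -> supp_below a S.
Proof. by move=> h H q hq c qc; exact: olt_trans (H q hq c qc) h. Qed.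

Lemma lvl0 (a : O) S q : supp_below a S -> S q != 0 -> q a = 0.
Proof.
move=> H hq; apply/eqP; apply: contraT => qa.
by case: (olt_irrefl (H q hq a qa)).
Qed.

Lemma gtR_lead g : gtR g -> exists M, is_lead g M /\ mon_lt ez M.
Proof.
move=> H; have [m [[nz lead] pos]] := H (g ez + 1).
have mz : m <> ez.
  move=> e; move: pos; rewrite e /sadd /sopp cst_at.
  have K : forall x : R, ~ (0 < x + - (x + 1)) by move=> x; lra.
  exact: K.
have lt0 : mon_lt ez m.
  case: (mon_lt_total mz) => // h; exfalso.
  have := lead _ h; rewrite /sadd /sopp cst_at.
  have K : forall x : R, ~ (x + - (x + 1) = 0) by move=> x; lra.
  exact: K.
exists m; split=> //; split.
  by move: nz; rewrite /sadd /sopp cst_ne // oppr0 addr0.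
move=> n hn; have nz' : n <> ez by move=> e; subst; exact: mon_lt_asym lt0 hn.
by have := lead _ hn; rewrite /sadd /sopp cst_ne // oppr0 addr0.
Qed.

Lemma ez_lt_e0 : mon_lt ez e0.
Proof.
exists (ozero O); split; last by move=> c /not_lt_zero.
by rewrite /ezero /eunit asboolT // ltr01.
Qed.

Lemma gtR_of (T : ser) : T e0 = 1 -> (forall p, mon_lt e0 p -> T p = 0) -> gtR T.
Proof.
move=> h1 h2 c; exists e0; split; [split|].
- rewrite /sadd /sopp h1 cst_ne ?oppr0 ?addr0 ?oner_eq0 //.
  by move=> e; apply: (mon_lt_irr (r := ez)); rewrite -{2}e; exact: ez_lt_e0.
- move=> n hn; rewrite /sadd /sopp h2 // cst_ne ?oppr0 ?addr0 //.
  by move=> e; subst n; exact: mon_lt_asym ez_lt_e0 hn.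
- rewrite /sadd /sopp h1 cst_ne ?oppr0 ?addr0 ?ltr01 //.
  by move=> e; apply: (mon_lt_irr (r := ez)); rewrite -{2}e; exact: ez_lt_e0.
Qed.

Lemma lead_xL : is_lead (@xL R O) e0.
Proof.
split; first by rewrite /xL mono_at oner_eq0.
by move=> n hn; rewrite /xL mono_ne // => e; subst n; exact: mon_lt_irr hn.
Qed.

Lemma spow_le (a : O) (h : ser) : (forall p, h p != 0 -> p a <= -1) ->
  forall k p, spow h k p != 0 -> p a <= - k%:R.
Proof.
move=> H; elim=> [|k IH] p.
  by rewrite /spow /= => /cst_neq0 ->; rewrite /ezero oppr0.
rewrite /spow iterS -/(spow _ _) => /smul_supp [p1 [p2 [<- [h1 h2]]]].
have := H _ h1; have := IH _ h2; rewrite /eadd mulrS.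
move: (p1 a) (p2 a) (k%:R : R) => x y z; clear; move=> l1 l2; lra.
Qed.

End Aux.
Theorem lemma9p2 (R : realType) (O : ordStruct)
    (comp : series R O -> series R O -> series R O) :
  is_composition comp -> admits_taylor comp ->
  forall f g : series R O, inL f -> inL g -> gtR g ->
    sder (comp f g) = smul (comp (sder f) g) (sder g).
Proof.
move=> Hc Ht f g Lf Lg Gg.
have [CLin [_ [_ [_ [_ [CL2a [_ [_ [_ CL5]]]]]]]]] := Hc.
set F := comp f g.
have LF : inL F := CLin _ _ Lf Gg.
have [M [leadM ltM]] := gtR_lead Gg.
have Lc1 : inL (cst 1 : series R O).
  exists (ozero O); split.
    by move=> q /cst_neq0 -> b; rewrite /ezero eqxx.
  by apply: (@wb2 _ _ _ (@ezero R O) (@ezero R O)) => p /cst_neq0 ->; left.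
have A1 : asym_lt (cst 1) g.
  by exists M; split=> // n /cst_neq0 ->.
have := Ht f g (cst 1) Lf Lg Lc1 Gg A1 => /= -[[[a1 Ha1] _] _].
have Lf1 : forall k, supp_below a1 (comp (sderN k f) g).
  move=> k q hq; have [H1 _] := Ha1 k; apply: H1.
  by rewrite spow_cst1 smul_cst1 /sscale mulf_neq0 // factR_neq0.
have [aF [HF1 HF2]] := LF.
have [ag [Hg1 Hg2]] := Lg.
have [b1 [h1 h2]] := ub2 a1 aF.
have [a [h3 h4]] := ub2 b1 ag.
have Lfk : forall k, supp_below a (comp (sderN k f) g).
  by move=> k; apply: (below_mono (olt_trans h1 h3)).
have LFk : forall k, inLa a (sderN k F).
  by move=> k; apply: sderN_inLa; split=> //; apply: (below_mono (olt_trans h2 h3)).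
have Lgk : forall k, inLa a (sderN k g).
  by move=> k; apply: sderN_inLa; split=> //; apply: (below_mono h4).
have a0 : olt (ozero O) a.
  have ha1 := olt_trans h1 h3.
  by case: (ozero_least a1) => [e|hz]; [rewrite -e | exact: olt_trans hz ha1].
have an0 : a <> ozero O by move=> e; rewrite e in a0; exact: olt_irrefl a0.
have an0' : ozero O <> a by move=> e; apply: an0.
set E := eunit R a.
have Ea : E a = 1 by rewrite /E /eunit asboolT.
have Eb : forall b, b <> a -> E b = 0 by move=> b nb; rewrite /E /eunit asboolF.
have Ebl : forall b, olt b a -> E b = 0.
  by move=> b hb; apply: Eb => e; subst b; exact: olt_irrefl hb.
set r : expo R O := fun b => - E b.
set eps : series R O := mono r.
set e0 := eunit R (ozero O).
have r_lt_e0 : mon_lt r e0.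
  exists (ozero O); split; last by move=> c /not_lt_zero.
  by rewrite /r Eb // /e0 /eunit asboolT // oppr0 ltr01.
have Leps : inL eps.
  exists (osucc a); split; last first.
    by apply: (@wb2 _ _ _ r r) => p /mono_neq0 ->; left.
  move=> q /mono_neq0 -> c; rewrite /r oppr_eq0; case: (pselect (c = a)) => [->|ne].
    by move=> _; exact: osucc_gt.
  by rewrite Eb // eqxx.
have LX : inL (@xL R O).
  exists (osucc (ozero O)); split; last first.
    by apply: (@wb2 _ _ _ e0 e0) => p /mono_neq0 ->; left.
  move=> q /mono_neq0 -> c; rewrite /eunit; case: (pselect (c = ozero O)) => [->|ne].
    by move=> _; exact: osucc_gt.
  by rewrite asboolF // eqxx.
have e0r : e0 <> r by move=> e; apply: (mon_lt_irr (r := r)); rewrite -{2}e.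
set xe := sadd (@xL R O) eps.
have LXe : inL xe.
  exists (osucc a); split; last first.
    apply: (@wb2 _ _ _ e0 r) => p hp.
    case: (pselect (p = e0)) => [->|ne]; first by left.
    right; apply: (@mono_neq0 R O); move: hp; rewrite /supp /= /xe /sadd /xL (mono_ne ne) add0r //.
  move=> q hq c qc.
  case: (pselect (q = e0)) => [e|ne].
    move: qc; rewrite e /e0 /eunit; case: (pselect (c = ozero O)) => [->|nc].
      by move=> _; exact: olt_trans a0 (osucc_gt a).
    by rewrite asboolF // eqxx.
  have qr : q = r.
    by apply: (@mono_neq0 R O); move: hq; rewrite /xe /sadd /xL (mono_ne ne) add0r.
  move: qc; rewrite qr /r oppr_eq0; case: (pselect (c = a)) => [->|nc].
    by move=> _; exact: osucc_gt.
  by rewrite Eb // eqxx.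
have GX : gtR (@xL R O).
  apply: gtR_of; first by rewrite /xL mono_at.
  by move=> p hp; rewrite /xL mono_ne // => e; subst p; exact: mon_lt_irr hp.
have GXe : gtR xe.
  apply: gtR_of.
    by rewrite /xe /sadd /xL mono_at /eps mono_ne // addr0.
  move=> p hp; rewrite /xe /sadd /xL /eps !mono_ne ?addr0 //.
    by move=> e; subst p; exact: mon_lt_asym r_lt_e0 hp.
  by move=> e; subst p; exact: mon_lt_irr hp.
have Aeps : asym_lt eps (@xL R O).
  by exists e0; split; [exact: lead_xL | move=> n /mono_neq0 ->].
have := Ht F (@xL R O) eps LF LX Leps GX Aeps => /= -[_ eqA].
have := Ht g (@xL R O) eps Lg LX Leps GX Aeps => /= -[sumG eqG].
have TXc : forall (S : series R O) k p, inL (sderN k S) ->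
    sscale (k`!%:R)^-1 (smul (comp (sderN k S) (@xL R O)) (spow eps k)) p =
    (k`!%:R)^-1 * sderN k S (fun b => p b + k%:R * E b).
  move=> S k p LS; rewrite /sscale CL2a // /eps spow_mono smul_mono_r.
  by congr (_ * sderN _ _ _); apply: funext => b; rewrite /r mulrN opprK.
have inLk : forall S : series R O, inLa a S -> forall k, inL (sderN k S).
  by move=> S LS k; exists a; apply: sderN_inLa.
have X1 : forall S : series R O, inLa a S -> forall p, p a = -1 ->
    ssum (fun k => sscale (k`!%:R)^-1 (smul (comp (sderN k S) (@xL R O)) (spow eps k))) p
    = sder S (fun b => p b + E b).
  move=> S LS p pa; rewrite /ssum (@fsum_single _ _ _ 1%N).
    rewrite (TXc _ _ _ (inLk S LS 1%N)); rewrite factS fact0 muln1 mulr1n invr1 mul1r; congr (sder S _).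
    by apply: funext => b; rewrite mul1r.
  move=> k k1; rewrite (TXc _ _ _ (inLk S LS k)).
  case: (eqVneq (sderN k S (fun b => p b + k%:R * E b)) 0) => [->|hne]; first by rewrite mulr0.
  have := lvl0 (sderN_inLa k LS).1 hne; rewrite /= pa Ea mulr1 => e.
  have K : forall z : R, -1 + z = 0 -> z = 1 by move=> z; lra.
  have : (k%:R : R) == 1 by apply/eqP; exact: K e.
  by rewrite pnatr_eq1 => /eqP.
have X0 : forall S : series R O, inLa a S -> forall p, p a = 0 ->
    ssum (fun k => sscale (k`!%:R)^-1 (smul (comp (sderN k S) (@xL R O)) (spow eps k))) p
    = S p.
  move=> S LS p pa; rewrite /ssum (@fsum_single _ _ _ 0%N).
    rewrite (TXc S 0%N p (inLk S LS 0%N)) fact0 invr1 mul1r /=; congr S.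
    by apply: funext => b; rewrite mul0r addr0.
  move=> k k0; rewrite (TXc _ _ _ (inLk S LS k)).
  case: (eqVneq (sderN k S (fun b => p b + k%:R * E b)) 0) => [->|hne]; first by rewrite mulr0.
  have := lvl0 (sderN_inLa k LS).1 hne; rewrite /= pa Ea mulr1 add0r => /eqP.
  by rewrite pnatr_eq0 => /eqP.
have Xsupp : forall S : series R O, inLa a S -> forall p,
    ssum (fun k => sscale (k`!%:R)^-1 (smul (comp (sderN k S) (@xL R O)) (spow eps k))) p != 0 ->
    exists k, sderN k S (fun b => p b + k%:R * E b) != 0.
  move=> S LS p /fsum_neq0 [k]; rewrite (TXc _ _ _ (inLk S LS k)) mulf_eq0 negb_or => /andP [_ h].
  by exists k.
have LFa : inLa a F by apply: (sderN_inLa 0 (conj _ HF2)); apply: (below_mono (olt_trans h2 h3)).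
have Lga : inLa a g by apply: (sderN_inLa 0 (conj _ Hg2)); apply: (below_mono h4).
set TG := (fun k => sscale (k`!%:R)^-1 (smul (comp (sderN k g) (@xL R O)) (spow eps k))).
set G := ssum TG.
set h := sadd G (sopp g).
have hsupp : forall p, h p != 0 -> exists k, (0 < k)%N /\ p a = - k%:R /\
    sderN k g (fun b => p b + k%:R * E b) != 0.
  move=> p hp; case: (eqVneq (p a) 0) => [pa|pa].
    by move: hp; rewrite /h /sadd /sopp /G /TG X0 // subrr eqxx.
  have gp : g p = 0.
    by apply/eqP; apply: contraT => gp; move: pa; rewrite (lvl0 Lga.1 gp) eqxx.
  move: hp; rewrite /h /sadd /sopp gp oppr0 addr0 => /Xsupp - /(_ Lga) [k hk].
  exists k; split; last split => //.
    by rewrite lt0n; apply: contra pa => /eqP k0; move: hk; rewrite k0 /= => /(lvl0 Lga.1); rewrite mul0r addr0 => ->.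
  have := lvl0 (sderN_inLa k Lga).1 hk; rewrite /= Ea mulr1 => /eqP.
  by rewrite addr_eq0 => /eqP.
have Lh : inL h.
  exists (osucc a); split.
    move=> p /hsupp [k [k0 [pa hk]]] c pc.
    case: (pselect (c = a)) => [->|nc]; first exact: osucc_gt.
    apply: olt_trans (osucc_gt a); apply: ((sderN_inLa k Lga).1 _ hk c).
    by rewrite /= Eb // mulr0 addr0.
  apply: (wb_sub _ sumG.2.1) => p /hsupp [k [k0 [pa hk]]].
  exists k => //; rewrite /supp /= /TG (TXc _ _ _ (inLk g Lga k)).
  by rewrite mulf_neq0 // factR_neq0.
have Ah : asym_lt h g.
  exists M; split=> // p /hsupp [k [k0 [pa hk]]].
  case: k k0 pa hk => // k _ pa hk.
  have [q [gq lt]] := sderN_lt hk.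
  have plt : mon_lt p (fun b => p b + k.+1%:R * E b).
    exists a; split; first by rewrite Ea mulr1 ltrDl ltr0n.
    by move=> c hc; rewrite Ebl // mulr0 addr0.
  have qM : q = M \/ mon_lt q M.
    case: (pselect (q = M)) => [->|nq]; first by left.
    case: (mon_lt_total nq) => [h0|h0]; first by right.
    by move: gq; rewrite (leadM.2 _ h0) eqxx.
  case: qM => [<-|qM]; first exact: mon_lt_trans plt lt.
  exact: mon_lt_trans (mon_lt_trans plt lt) qM.
have := Ht f g h Lf Lg Lh Gg Ah => /= -[_ eqB].
have Gh : sadd g h = G.
  by apply: funext => p; rewrite /h /sadd /sopp addrC subrK.
have eqAB := eqA.
rewrite /F CL5 // -eqG -/G -Gh -eqB in eqAB.
have hle : forall p, h p != 0 -> p a <= -1.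
  move=> p /hsupp [k [k0 [pa _]]]; rewrite pa lerN2.
  by rewrite -[1]/(1%:R) ler_nat.
apply: funext => n.
case: (pselect (exists c, n c != 0 /\ ~ olt c a)) => [[c [nc nlt]] | Hn].
  have -> : sder F n = 0.
    apply/eqP; apply: contraT => hne; exfalso; apply: nlt.
    exact: ((sderN_inLa 1 LFa).1 n hne c nc).
  apply/esym/eqP; apply: contraT => /smul_supp [p1 [p2 [e [hp1 hp2]]]].
  exfalso; apply: nlt; move: nc; rewrite -e /eadd.
  case: (eqVneq (p1 c) 0) => [->|h1c].
    rewrite add0r => h2c; exact: ((sderN_inLa 1 Lga).1 _ hp2 c h2c).
  by move=> _; exact: (Lfk 1%N _ hp1 c h1c).
have na : n a = 0.
  apply/eqP; apply: contraT => na; exfalso; apply: Hn; exists a; split=> //.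
  exact: olt_irrefl.
set m : expo R O := fun b => n b - E b.
have ma : m a = -1 by rewrite /m na Ea sub0r.
have := congr1 (fun s => s m) eqAB => /=.
rewrite (X1 (comp f g) LFa m ma).
have -> : (fun b => m b + E b) = n by apply: funext => b; rewrite /m subrK.
move=> ->; rewrite /ssum (@fsum_single _ _ _ 1%N); last first.
  move=> k k1; rewrite /sscale.
  case: (eqVneq (smul (comp (sderN k f) g) (spow h k) m) 0) => [->|hne]; first by rewrite mulr0.
  exfalso; case: k k1 hne => [_|k k1].
    rewrite /spow /= smul_cst1 => hne.
    by move: (lvl0 (Lfk 0%N) hne); rewrite /= ma => /eqP; rewrite oppr_eq0 oner_eq0.
  move=> /smul_supp [p1 [p2 [e [hp1 hp2]]]].
  have e1 := lvl0 (Lfk k.+1) hp1.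
  have e2 := spow_le hle hp2.
  have : m a = p1 a + p2 a by rewrite -e.
  rewrite ma e1 add0r => e3; rewrite -e3 in e2.
  have : (k.+1 <= 1)%N.
    by rewrite -(ler_nat R) -lerN2 mulr1n; exact: e2.
  by rewrite ltnS leqn0 => /eqP k0; apply: k1; rewrite k0.
rewrite /sscale factS fact0 muln1 mulr1n invr1 mul1r spow1.
pose phi := (fun i : expo R O * expo R O => (i.1, fun b => i.2 b + E b)).
pose psi := (fun i : expo R O * expo R O => (i.1, fun b => i.2 b - E b)).
have K1 : cancel phi psi.
  by move=> [p1 p2]; congr pair; apply: funext => b; rewrite /= addrK.
have K2 : cancel psi phi.
  by move=> [p1 p2]; congr pair; apply: funext => b; rewrite /= subrK.
rewrite /smul [RHS](fsum_bij _ K1 K2).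
congr fsum; apply: funext => -[p1 p2] /=.
have ceq : (eadd p1 p2 = m) <-> (eadd p1 (fun b => p2 b + E b) = n).
  split => e; apply: funext => b; have := congr1 (fun s => s b) e; rewrite /eadd /m /=.
    by move=> hb; rewrite addrA hb subrK.
  by move=> <-; rewrite addrA addrK.
case: (pselect (eadd p1 p2 = m)) => hc; last first.
  by rewrite (asboolF hc) asboolF // => e; apply: hc; exact: (proj2 ceq e).
rewrite (asboolT hc) (asboolT (proj1 ceq hc)).
case: (eqVneq (comp (sder f) g p1) 0) => [->|hA]; first by rewrite !mul0r.
congr (_ * _).
have p1a := lvl0 (Lfk 1%N) hA.
have p2a : p2 a = -1.
  by have := congr1 (fun s => s a) hc; rewrite /eadd /= p1a add0r ma.
have gp2 : g p2 = 0.
  apply/eqP; apply: contraT => gp; have := lvl0 Lga.1 gp; rewrite p2a => /eqP.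
  by rewrite oppr_eq0 oner_eq0.
by rewrite /h /sadd /sopp gp2 oppr0 addr0 /G /TG X1.
Qed.
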